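(* Let $\mathrm{e}<\delta\le\sum_{j=1}^5(5/6)^j$, $\tau=300\delta\ln(1+k)$, $\gamma=(\delta-1)(3-\delta)/(\delta-2)$, $S=2\sum_{j=0}^{4}(5/6)^j\tau$ and $$M=\frac{(\delta+1)\ln\delta-1}{\ln\delta-1}\,S+\frac{(\gamma+2\tau+1)\ln\delta-1}{\ln\delta-1}.$$ In an execution of One-fail Adaptive with parameter $\delta$ on $k$ initially active nodes, if the number of messages still to be delivered is more than $M$, then after $(\delta+1)k$ AT-steps the number of messages left to deliver is at most $M$ with probability at least $1-1/(1+k)$.
   Context: Model: one-hop radio network without collision detection; in each synchronous step, a message is delivered iff exactly one active node transmits, and the delivering node becomes idle; nodes cannot distinguish silence from collision; all $k$ nodes are activated at time $0$. Protocol One-fail Adaptive with parameter $\delta$, run by each active node: initially $\widetilde\kappa\leftarrow\delta+1$, $\sigma\leftarrow0$. In step $s=1,2,\dots$: if $s$ is even (BT-step) transmit with probability $1/(1+\log_2(\sigma+1))$; if $s$ is odd (AT-step) transmit with probability $1/\widetilde\kappa$, then $\widetilde\kappa\leftarrow\widetilde\kappa+1$. On receiving another node's message in step $s$: $\sigma\leftarrow\sigma+1$, and $\widetilde\kappa\leftarrow\max\{\widetilde\kappa-\delta,\delta+1\}$ if $s$ even, $\widetilde\kappa\leftarrow\max\{\widetilde\kappa-\delta-1,\delta+1\}$ if $s$ odd; a node stops once its message is delivered. *)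

(* Defs.v *)
From Stdlib Require Import Reals List Arith Bool.
Import ListNotations.
Open Scope R_scope.

Record node := mkNode { active : bool; kap : R; sig : nat }.

Definition log2 (x : R) : R := ln x / ln 2.

(* Transmission probability of an (active) node at step s (1-based). *)
Definition tx_prob (s : nat) (nd : node) : R :=
  if Nat.even s then / (1 + log2 (INR (sig nd) + 1)) else / kap nd.

(* All transmission patterns (one bit per node) for n nodes. *)
Fixpoint patterns (n : nat) : list (list bool) :=
  match n with
  | O => [ [] ]
  | S n' => map (cons true) (patterns n') ++ map (cons false) (patterns n')
  end.

Fixpoint pat_weight (s : nat) (st : list node) (X : list bool) : R :=
  match st, X with
  | nd :: st', x :: X' =>
      (if active nd then (if x then tx_prob s nd else 1 - tx_prob s nd)
       else (if x then 0 else 1)) * pat_weight s st' X'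
  | _, _ => 1
  end.

Fixpoint n_tx (st : list node) (X : list bool) : nat :=
  match st, X with
  | nd :: st', x :: X' => (if active nd && x then 1 else 0) + n_tx st' X'
  | _, _ => 0
  end%nat.

(* Update of one node in step s, given whether a message was delivered
   (exactly one active transmitter) and whether this node transmitted. *)
Definition upd_node (delta : R) (s : nat) (delivered : bool) (nd : node) (x : bool) : node :=
  if active nd then
    if delivered && x then mkNode false (kap nd) (sig nd)   (* delivered its message: stops *)
    else
      let k1 := if Nat.even s then kap nd else kap nd + 1 in
      if delivered then
        mkNode true
          (Rmax (k1 - (if Nat.even s then delta else delta + 1)) (delta + 1))
          (S (sig nd))
      else mkNode true k1 (sig nd)
  else nd.

Fixpoint map2n {A B C} (f : A -> B -> C) (l : list A) (m : list B) : list C :=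
  match l, m with
  | a :: l', b :: m' => f a b :: map2n f l' m'
  | _, _ => []
  end.

Definition next_state (delta : R) (s : nat) (st : list node) (X : list bool) : list node :=
  map2n (upd_node delta s (Nat.eqb (n_tx st X) 1)) st X.

Definition n_active (st : list node) : nat := length (filter active st).

Fixpoint sumR (l : list R) : R :=
  match l with [] => 0 | x :: l' => x + sumR l' end.

(* Probability that, starting in state st just before step s and running
   T further steps, the number of active nodes (messages still to be
   delivered) is at most M. *)
Fixpoint prob_le (delta M : R) (T s : nat) (st : list node) : R :=
  match T with
  | O => if Rle_dec (INR (n_active st)) M then 1 else 0
  | S T' =>
      sumR (map (fun X => pat_weight s st X *
                          prob_le delta M T' (S s) (next_state delta s st X))
                (patterns (length st)))
  end.

Definition init_state (delta : R) (k : nat) : list node :=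
  repeat (mkNode true (delta + 1) 0) k.

Definition prob_after (delta M : R) (k t : nat) : R :=
  prob_le delta M t 1 (init_state delta k).

(* Number of AT-steps (odd steps) among steps 1..t. *)
Definition n_AT (t : nat) : nat := ((t + 1) / 2)%nat.

(* Main.v *)
Require Import Defs.
From Stdlib Require Import Reals List Arith Lra Lia Psatz.
Import ListNotations.
Open Scope R_scope.


Lemma sumR_app l1 l2 : sumR (l1++l2) = sumR l1 + sumR l2.
Proof. induction l1; simpl; [ring| rewrite IHl1; ring]. Qed.

Lemma sumR_map_le {A} (f g : A->R) l :
  (forall x, In x l -> f x <= g x) -> sumR (map f l) <= sumR (map g l).
Proof.
  induction l; simpl; intros H; [lra|].
  pose proof (H a (or_introl eq_refl)). pose proof (IHl (fun x h => H x (or_intror h))). lra.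
Qed.

Lemma sumR_map_ext {A} (f g : A->R) l :
  (forall x, In x l -> f x = g x) -> sumR (map f l) = sumR (map g l).
Proof.
  induction l; simpl; intros H; [lra|].
  rewrite (H a (or_introl eq_refl)), (IHl (fun x h => H x (or_intror h))). reflexivity.
Qed.

Lemma sumR_map_lin {A} (f g : A -> R) u v l :
  sumR (map (fun x => u * f x + v * g x) l) = u * sumR (map f l) + v * sumR (map g l).
Proof. induction l; simpl; [ring| rewrite IHl; ring]. Qed.

Lemma sumR_map_scale {A} (f : A -> R) u l :
  sumR (map (fun x => u * f x) l) = u * sumR (map f l).
Proof. induction l; simpl; [ring| rewrite IHl; ring]. Qed.

Lemma patterns_length m X : In X (patterns m) -> length X = m.
Proof.
  revert X; induction m; simpl; intros X H.
  - destruct H as [<-|[]]; reflexivity.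
  - apply in_app_or in H; destruct H as [H|H]; apply in_map_iff in H;
      destruct H as [Y [<- HY]]; simpl; rewrite (IHm Y HY); reflexivity.
Qed.

Definition G (s : nat) (st : list node) (f : nat -> R) : R :=
  sumR (map (fun X => pat_weight s st X * f (n_tx st X)) (patterns (length st))).

Lemma G_ext s st f g : (forall c, f c = g c) -> G s st f = G s st g.
Proof. intros H; unfold G; apply sumR_map_ext; intros; rewrite H; reflexivity. Qed.

Lemma G_cons s nd st f :
  G s (nd::st) f = if active nd then tx_prob s nd * G s st (fun c => f (S c))
                                    + (1 - tx_prob s nd) * G s st f
                   else G s st f.
Proof.
  unfold G; simpl length; simpl patterns.
  rewrite map_app, sumR_app, !map_map. simpl.
  destruct (active nd); simpl.
  - rewrite <- !sumR_map_scale. f_equal; apply sumR_map_ext; intros; ring.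
  - erewrite (sumR_map_ext _ (fun X => 0 * (pat_weight s st X * f (n_tx st X)))) by (intros; ring).
    erewrite (sumR_map_ext (fun X => 1 * _ * _) (fun X => 1 * (pat_weight s st X * f (n_tx st X)))) by (intros; ring).
    rewrite !sumR_map_scale. ring.
Qed.

Lemma G_const s st u : G s st (fun _ => u) = u.
Proof.
  induction st as [|nd st IH]; [unfold G; simpl; ring|].
  rewrite G_cons, IH. destruct (active nd); ring.
Qed.

Definition allq (s : nat) (st : list node) (q : R) :=
  forall nd, In nd st -> active nd = true -> tx_prob s nd = q.

Lemma G_zero s st q : allq s st q ->
  G s st (fun c => if Nat.eqb c 0 then 1 else 0) = (1 - q) ^ n_active st.
Proof.
  induction st as [|nd st IH]; intros H; [unfold G; simpl; ring|].
  rewrite G_cons. unfold n_active; simpl.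
  assert (H' : allq s st q) by (intros x Hx; apply H; simpl; auto).
  destruct (active nd) eqn:E.
  - simpl. rewrite G_const, IH by auto.
    rewrite (H nd (or_introl eq_refl) E). unfold n_active. ring.
  - apply IH; auto.
Qed.

Lemma G_one s st q : allq s st q ->
  G s st (fun c => if Nat.eqb c 1 then 1 else 0) =
  INR (n_active st) * q * (1 - q) ^ (pred (n_active st)).
Proof.
  induction st as [|nd st IH]; intros H; [unfold G; simpl; ring|].
  rewrite G_cons. unfold n_active; simpl.
  assert (H' : allq s st q) by (intros x Hx; apply H; simpl; auto).
  destruct (active nd) eqn:E.
  - simpl length.
    rewrite G_zero with (q:=q), IH by auto.
    rewrite (H nd (or_introl eq_refl) E). unfold n_active.
    destruct (length (filter active st)) as [|m]; simpl pred; rewrite ?S_INR; simpl; ring.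
  - apply IH; auto.
Qed.


Definition allsame (st : list node) (k : R) (sg : nat) :=
  forall nd, In nd st -> active nd = true -> kap nd = k /\ sig nd = sg.

Definition Kn (delta : R) (s : nat) (d : bool) (k : R) : R :=
  if d then Rmax ((if Nat.even s then k else k + 1) - (if Nat.even s then delta else delta + 1)) (delta + 1)
  else (if Nat.even s then k else k + 1).

Definition Sn (d : bool) (sg : nat) : nat := if d then S sg else sg.

Lemma next_props delta s d st X k sg :
  length X = length st -> allsame st k sg ->
  allsame (map2n (upd_node delta s d) st X) (Kn delta s d k) (Sn d sg) /\
  (n_active (map2n (upd_node delta s d) st X) + (if d then n_tx st X else 0) = n_active st)%nat.
Proof.
  revert X; induction st as [|nd st IH]; intros X HL Hs.
  - destruct X; simpl in *; [|discriminate]. split; [intros ? []|destruct d; reflexivity].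
  - destruct X as [|x X]; simpl in HL; [discriminate|]. injection HL as HL.
    assert (Hs' : allsame st k sg) by (intros y Hy; apply Hs; simpl; auto).
    destruct (IH X HL Hs') as [IHa IHb].
    simpl map2n. split.
    + intros y [<-|Hy] Hya; [|now apply IHa].
      unfold upd_node in *. destruct (active nd) eqn:E; [|congruence].
      destruct (Hs nd (or_introl eq_refl) E) as [Hk Hsg].
      destruct d, x; simpl in *; try discriminate; unfold Kn, Sn; simpl; rewrite ?Hk, ?Hsg; auto.
    + unfold n_active in *. set (tl := map2n (upd_node delta s d) st X) in *.
      cbn [filter n_tx length]. unfold upd_node at 1.
      destruct (active nd) eqn:E; destruct d, x; cbn [active andb filter length]; rewrite ?E; cbn [filter length]; lia.
Qed.

Definition firstkap (st : list node) : R :=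
  match filter active st with nd :: _ => kap nd | [] => 0 end.

Lemma firstkap_same st k sg : allsame st k sg -> (0 < n_active st)%nat -> firstkap st = k.
Proof.
  unfold firstkap, n_active. induction st as [|nd st IH]; simpl; intros H Hn; [lia|].
  destruct (active nd) eqn:E.
  - apply (H nd (or_introl eq_refl) E).
  - apply IH; auto. intros y Hy; apply H; simpl; auto.
Qed.


Lemma exp_half x : exp x = exp (x/2) * exp (x/2).
Proof. rewrite <- exp_plus. f_equal. field. Qed.

Lemma sq_low x t r : 0 <= t -> t <= exp (x/2) -> r <= t*t -> r <= exp x.
Proof.
  intros H0 H1 H2. rewrite exp_half. apply Rle_trans with (t*t); auto.
  apply Rmult_le_compat; auto.
Qed.

Lemma e_low : 2.717950074795 <= exp (1).
Proof.
  assert (H0 : 1.000244140625 <= exp ((1)/4096)) by (eapply Rle_trans; [|apply exp_ineq1_le]; lra).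
  assert (H1 : 1.000488340854 <= exp ((1)/2048)) by (apply (sq_low _ 1.000244140625); [lra| replace (((1)/2048)/2) with ((1)/4096) by lra; exact H0 | lra]).
  assert (H2 : 1.000976920184 <= exp ((1)/1024)) by (apply (sq_low _ 1.000488340854); [lra| replace (((1)/1024)/2) with ((1)/2048) by lra; exact H1 | lra]).
  assert (H3 : 1.001954794741 <= exp ((1)/512)) by (apply (sq_low _ 1.000976920184); [lra| replace (((1)/512)/2) with ((1)/1024) by lra; exact H2 | lra]).
  assert (H4 : 1.003913410704 <= exp ((1)/256)) by (apply (sq_low _ 1.001954794741); [lra| replace (((1)/256)/2) with ((1)/512) by lra; exact H3 | lra]).
  assert (H5 : 1.007842136191 <= exp ((1)/128)) by (apply (sq_low _ 1.003913410704); [lra| replace (((1)/128)/2) with ((1)/256) by lra; exact H4 | lra]).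
  assert (H6 : 1.015745771482 <= exp ((1)/64)) by (apply (sq_low _ 1.007842136191); [lra| replace (((1)/64)/2) with ((1)/128) by lra; exact H5 | lra]).
  assert (H7 : 1.031739472283 <= exp ((1)/32)) by (apply (sq_low _ 1.015745771482); [lra| replace (((1)/32)/2) with ((1)/64) by lra; exact H6 | lra]).
  assert (H8 : 1.064486338666 <= exp ((1)/16)) by (apply (sq_low _ 1.031739472283); [lra| replace (((1)/16)/2) with ((1)/32) by lra; exact H7 | lra]).
  assert (H9 : 1.133131165206 <= exp ((1)/8)) by (apply (sq_low _ 1.064486338666); [lra| replace (((1)/8)/2) with ((1)/16) by lra; exact H8 | lra]).
  assert (H10 : 1.283986237561 <= exp ((1)/4)) by (apply (sq_low _ 1.133131165206); [lra| replace (((1)/4)/2) with ((1)/8) by lra; exact H9 | lra]).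
  assert (H11 : 1.648620658246 <= exp ((1)/2)) by (apply (sq_low _ 1.283986237561); [lra| replace (((1)/2)/2) with ((1)/4) by lra; exact H10 | lra]).
  assert (H12 : 2.717950074795 <= exp (1)) by (apply (sq_low _ 1.648620658246); [lra| replace ((1)/2) with ((1)/2) by lra; exact H11 | lra]).
  exact H12.
Qed.

Lemma pc0 : 0.395969162764 <= exp (-(0.926)).
Proof.
  assert (H0 : 0.999095703125 <= exp ((-(0.926))/1024)) by (eapply Rle_trans; [|apply exp_ineq1_le]; lra).
  assert (H1 : 0.998192224002 <= exp ((-(0.926))/512)) by (apply (sq_low _ 0.999095703125); [lra| replace (((-(0.926))/512)/2) with ((-(0.926))/1024) by lra; exact H0 | lra]).
  assert (H2 : 0.996387716058 <= exp ((-(0.926))/256)) by (apply (sq_low _ 0.998192224002); [lra| replace (((-(0.926))/256)/2) with ((-(0.926))/512) by lra; exact H1 | lra]).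
  assert (H3 : 0.992788480711 <= exp ((-(0.926))/128)) by (apply (sq_low _ 0.996387716058); [lra| replace (((-(0.926))/128)/2) with ((-(0.926))/256) by lra; exact H2 | lra]).
  assert (H4 : 0.985628967432 <= exp ((-(0.926))/64)) by (apply (sq_low _ 0.992788480711); [lra| replace (((-(0.926))/64)/2) with ((-(0.926))/128) by lra; exact H3 | lra]).
  assert (H5 : 0.971464461441 <= exp ((-(0.926))/32)) by (apply (sq_low _ 0.985628967432); [lra| replace (((-(0.926))/32)/2) with ((-(0.926))/64) by lra; exact H4 | lra]).
  assert (H6 : 0.943743199842 <= exp ((-(0.926))/16)) by (apply (sq_low _ 0.971464461441); [lra| replace (((-(0.926))/16)/2) with ((-(0.926))/32) by lra; exact H5 | lra]).
  assert (H7 : 0.890651227248 <= exp ((-(0.926))/8)) by (apply (sq_low _ 0.943743199842); [lra| replace (((-(0.926))/8)/2) with ((-(0.926))/16) by lra; exact H6 | lra]).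
  assert (H8 : 0.793259608598 <= exp ((-(0.926))/4)) by (apply (sq_low _ 0.890651227248); [lra| replace (((-(0.926))/4)/2) with ((-(0.926))/8) by lra; exact H7 | lra]).
  assert (H9 : 0.629260806633 <= exp ((-(0.926))/2)) by (apply (sq_low _ 0.793259608598); [lra| replace (((-(0.926))/2)/2) with ((-(0.926))/4) by lra; exact H8 | lra]).
  assert (H10 : 0.395969162764 <= exp (-(0.926))) by (apply (sq_low _ 0.629260806633); [lra| replace ((-(0.926))/2) with ((-(0.926))/2) by lra; exact H9 | lra]).
  exact H10.
Qed.

Lemma pc1 : 0.386183792474 <= exp (-(0.951)).
Proof.
  assert (H0 : 0.999071289062 <= exp ((-(0.951))/1024)) by (eapply Rle_trans; [|apply exp_ineq1_le]; lra).
  assert (H1 : 0.998143440628 <= exp ((-(0.951))/512)) by (apply (sq_low _ 0.999071289062); [lra| replace (((-(0.951))/512)/2) with ((-(0.951))/1024) by lra; exact H0 | lra]).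
  assert (H2 : 0.996290328068 <= exp ((-(0.951))/256)) by (apply (sq_low _ 0.998143440628); [lra| replace (((-(0.951))/256)/2) with ((-(0.951))/512) by lra; exact H1 | lra]).
  assert (H3 : 0.992594417801 <= exp ((-(0.951))/128)) by (apply (sq_low _ 0.996290328068); [lra| replace (((-(0.951))/128)/2) with ((-(0.951))/256) by lra; exact H2 | lra]).
  assert (H4 : 0.985243678249 <= exp ((-(0.951))/64)) by (apply (sq_low _ 0.992594417801); [lra| replace (((-(0.951))/64)/2) with ((-(0.951))/128) by lra; exact H3 | lra]).
  assert (H5 : 0.970705105529 <= exp ((-(0.951))/32)) by (apply (sq_low _ 0.985243678249); [lra| replace (((-(0.951))/32)/2) with ((-(0.951))/64) by lra; exact H4 | lra]).
  assert (H6 : 0.942268401900 <= exp ((-(0.951))/16)) by (apply (sq_low _ 0.970705105529); [lra| replace (((-(0.951))/16)/2) with ((-(0.951))/32) by lra; exact H5 | lra]).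
  assert (H7 : 0.887869741219 <= exp ((-(0.951))/8)) by (apply (sq_low _ 0.942268401900); [lra| replace (((-(0.951))/8)/2) with ((-(0.951))/16) by lra; exact H6 | lra]).
  assert (H8 : 0.788312677372 <= exp ((-(0.951))/4)) by (apply (sq_low _ 0.887869741219); [lra| replace (((-(0.951))/4)/2) with ((-(0.951))/8) by lra; exact H7 | lra]).
  assert (H9 : 0.621436877305 <= exp ((-(0.951))/2)) by (apply (sq_low _ 0.788312677372); [lra| replace (((-(0.951))/2)/2) with ((-(0.951))/4) by lra; exact H8 | lra]).
  assert (H10 : 0.386183792474 <= exp (-(0.951))) by (apply (sq_low _ 0.621436877305); [lra| replace ((-(0.951))/2) with ((-(0.951))/2) by lra; exact H9 | lra]).
  exact H10.
Qed.

Lemma pc2 : 0.376640012715 <= exp (-(0.976)).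
Proof.
  assert (H0 : 0.999046875000 <= exp ((-(0.976))/1024)) by (eapply Rle_trans; [|apply exp_ineq1_le]; lra).
  assert (H1 : 0.998094658447 <= exp ((-(0.976))/512)) by (apply (sq_low _ 0.999046875000); [lra| replace (((-(0.976))/512)/2) with ((-(0.976))/1024) by lra; exact H0 | lra]).
  assert (H2 : 0.996192947220 <= exp ((-(0.976))/256)) by (apply (sq_low _ 0.998094658447); [lra| replace (((-(0.976))/256)/2) with ((-(0.976))/512) by lra; exact H1 | lra]).
  assert (H3 : 0.992400388090 <= exp ((-(0.976))/128)) by (apply (sq_low _ 0.996192947220); [lra| replace (((-(0.976))/128)/2) with ((-(0.976))/256) by lra; exact H2 | lra]).
  assert (H4 : 0.984858530281 <= exp ((-(0.976))/64)) by (apply (sq_low _ 0.992400388090); [lra| replace (((-(0.976))/64)/2) with ((-(0.976))/128) by lra; exact H3 | lra]).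
  assert (H5 : 0.969946324667 <= exp ((-(0.976))/32)) by (apply (sq_low _ 0.984858530281); [lra| replace (((-(0.976))/32)/2) with ((-(0.976))/64) by lra; exact H4 | lra]).
  assert (H6 : 0.940795872735 <= exp ((-(0.976))/16)) by (apply (sq_low _ 0.969946324667); [lra| replace (((-(0.976))/16)/2) with ((-(0.976))/32) by lra; exact H5 | lra]).
  assert (H7 : 0.885096874155 <= exp ((-(0.976))/8)) by (apply (sq_low _ 0.940795872735); [lra| replace (((-(0.976))/8)/2) with ((-(0.976))/16) by lra; exact H6 | lra]).
  assert (H8 : 0.783396476638 <= exp ((-(0.976))/4)) by (apply (sq_low _ 0.885096874155); [lra| replace (((-(0.976))/4)/2) with ((-(0.976))/8) by lra; exact H7 | lra]).
  assert (H9 : 0.613710039608 <= exp ((-(0.976))/2)) by (apply (sq_low _ 0.783396476638); [lra| replace (((-(0.976))/2)/2) with ((-(0.976))/4) by lra; exact H8 | lra]).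
  assert (H10 : 0.376640012715 <= exp (-(0.976))) by (apply (sq_low _ 0.613710039608); [lra| replace ((-(0.976))/2) with ((-(0.976))/2) by lra; exact H9 | lra]).
  exact H10.
Qed.

Lemma pc3 : 0.367331863781 <= exp (-(1.001)).
Proof.
  assert (H0 : 0.999022460937 <= exp ((-(1.001))/1024)) by (eapply Rle_trans; [|apply exp_ineq1_le]; lra).
  assert (H1 : 0.998045877456 <= exp ((-(1.001))/512)) by (apply (sq_low _ 0.999022460937); [lra| replace (((-(1.001))/512)/2) with ((-(1.001))/1024) by lra; exact H0 | lra]).
  assert (H2 : 0.996095573506 <= exp ((-(1.001))/256)) by (apply (sq_low _ 0.998045877456); [lra| replace (((-(1.001))/256)/2) with ((-(1.001))/512) by lra; exact H1 | lra]).
  assert (H3 : 0.992206391558 <= exp ((-(1.001))/128)) by (apply (sq_low _ 0.996095573506); [lra| replace (((-(1.001))/128)/2) with ((-(1.001))/256) by lra; exact H2 | lra]).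
  assert (H4 : 0.984473523448 <= exp ((-(1.001))/64)) by (apply (sq_low _ 0.992206391558); [lra| replace (((-(1.001))/64)/2) with ((-(1.001))/128) by lra; exact H3 | lra]).
  assert (H5 : 0.969188118370 <= exp ((-(1.001))/32)) by (apply (sq_low _ 0.984473523448); [lra| replace (((-(1.001))/32)/2) with ((-(1.001))/64) by lra; exact H4 | lra]).
  assert (H6 : 0.939325608789 <= exp ((-(1.001))/16)) by (apply (sq_low _ 0.969188118370); [lra| replace (((-(1.001))/16)/2) with ((-(1.001))/32) by lra; exact H5 | lra]).
  assert (H7 : 0.882332599326 <= exp ((-(1.001))/8)) by (apply (sq_low _ 0.939325608789); [lra| replace (((-(1.001))/8)/2) with ((-(1.001))/16) by lra; exact H6 | lra]).
  assert (H8 : 0.778510815833 <= exp ((-(1.001))/4)) by (apply (sq_low _ 0.882332599326); [lra| replace (((-(1.001))/4)/2) with ((-(1.001))/8) by lra; exact H7 | lra]).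
  assert (H9 : 0.606079090368 <= exp ((-(1.001))/2)) by (apply (sq_low _ 0.778510815833); [lra| replace (((-(1.001))/2)/2) with ((-(1.001))/4) by lra; exact H8 | lra]).
  assert (H10 : 0.367331863781 <= exp (-(1.001))) by (apply (sq_low _ 0.606079090368); [lra| replace ((-(1.001))/2) with ((-(1.001))/2) by lra; exact H9 | lra]).
  exact H10.
Qed.

Lemma pc4 : 0.358253534625 <= exp (-(1.026)).
Proof.
  assert (H0 : 0.998998046875 <= exp ((-(1.026))/1024)) by (eapply Rle_trans; [|apply exp_ineq1_le]; lra).
  assert (H1 : 0.997997097660 <= exp ((-(1.026))/512)) by (apply (sq_low _ 0.998998046875); [lra| replace (((-(1.026))/512)/2) with ((-(1.026))/1024) by lra; exact H0 | lra]).
  assert (H2 : 0.995998206937 <= exp ((-(1.026))/256)) by (apply (sq_low _ 0.997997097660); [lra| replace (((-(1.026))/256)/2) with ((-(1.026))/512) by lra; exact H1 | lra]).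
  assert (H3 : 0.992012428221 <= exp ((-(1.026))/128)) by (apply (sq_low _ 0.995998206937); [lra| replace (((-(1.026))/128)/2) with ((-(1.026))/256) by lra; exact H2 | lra]).
  assert (H4 : 0.984088657744 <= exp ((-(1.026))/64)) by (apply (sq_low _ 0.992012428221); [lra| replace (((-(1.026))/64)/2) with ((-(1.026))/128) by lra; exact H3 | lra]).
  assert (H5 : 0.968430486300 <= exp ((-(1.026))/32)) by (apply (sq_low _ 0.984088657744); [lra| replace (((-(1.026))/32)/2) with ((-(1.026))/64) by lra; exact H4 | lra]).
  assert (H6 : 0.937857606795 <= exp ((-(1.026))/16)) by (apply (sq_low _ 0.968430486300); [lra| replace (((-(1.026))/16)/2) with ((-(1.026))/32) by lra; exact H5 | lra]).
  assert (H7 : 0.879576890623 <= exp ((-(1.026))/8)) by (apply (sq_low _ 0.937857606795); [lra| replace (((-(1.026))/8)/2) with ((-(1.026))/16) by lra; exact H6 | lra]).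
  assert (H8 : 0.773655506518 <= exp ((-(1.026))/4)) by (apply (sq_low _ 0.879576890623); [lra| replace (((-(1.026))/4)/2) with ((-(1.026))/8) by lra; exact H7 | lra]).
  assert (H9 : 0.598542842765 <= exp ((-(1.026))/2)) by (apply (sq_low _ 0.773655506518); [lra| replace (((-(1.026))/2)/2) with ((-(1.026))/4) by lra; exact H8 | lra]).
  assert (H10 : 0.358253534625 <= exp (-(1.026))) by (apply (sq_low _ 0.598542842765); [lra| replace ((-(1.026))/2) with ((-(1.026))/2) by lra; exact H9 | lra]).
  exact H10.
Qed.

Lemma pc5 : 0.349399355330 <= exp (-(1.051)).
Proof.
  assert (H0 : 0.998973632812 <= exp ((-(1.051))/1024)) by (eapply Rle_trans; [|apply exp_ineq1_le]; lra).
  assert (H1 : 0.997948319053 <= exp ((-(1.051))/512)) by (apply (sq_low _ 0.998973632812); [lra| replace (((-(1.051))/512)/2) with ((-(1.051))/1024) by lra; exact H0 | lra]).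
  assert (H2 : 0.995900847500 <= exp ((-(1.051))/256)) by (apply (sq_low _ 0.997948319053); [lra| replace (((-(1.051))/256)/2) with ((-(1.051))/512) by lra; exact H1 | lra]).
  assert (H3 : 0.991818498051 <= exp ((-(1.051))/128)) by (apply (sq_low _ 0.995900847500); [lra| replace (((-(1.051))/128)/2) with ((-(1.051))/256) by lra; exact H2 | lra]).
  assert (H4 : 0.983703933076 <= exp ((-(1.051))/64)) by (apply (sq_low _ 0.991818498051); [lra| replace (((-(1.051))/64)/2) with ((-(1.051))/128) by lra; exact H3 | lra]).
  assert (H5 : 0.967673427949 <= exp ((-(1.051))/32)) by (apply (sq_low _ 0.983703933076); [lra| replace (((-(1.051))/32)/2) with ((-(1.051))/64) by lra; exact H4 | lra]).
  assert (H6 : 0.936391863158 <= exp ((-(1.051))/16)) by (apply (sq_low _ 0.967673427949); [lra| replace (((-(1.051))/16)/2) with ((-(1.051))/32) by lra; exact H5 | lra]).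
  assert (H7 : 0.876829721388 <= exp ((-(1.051))/8)) by (apply (sq_low _ 0.936391863158); [lra| replace (((-(1.051))/8)/2) with ((-(1.051))/16) by lra; exact H6 | lra]).
  assert (H8 : 0.768830360309 <= exp ((-(1.051))/4)) by (apply (sq_low _ 0.876829721388); [lra| replace (((-(1.051))/4)/2) with ((-(1.051))/8) by lra; exact H7 | lra]).
  assert (H9 : 0.591100122932 <= exp ((-(1.051))/2)) by (apply (sq_low _ 0.768830360309); [lra| replace (((-(1.051))/2)/2) with ((-(1.051))/4) by lra; exact H8 | lra]).
  assert (H10 : 0.349399355330 <= exp (-(1.051))) by (apply (sq_low _ 0.591100122932); [lra| replace ((-(1.051))/2) with ((-(1.051))/2) by lra; exact H9 | lra]).
  exact H10.
Qed.

Lemma pc6 : 0.340763797741 <= exp (-(1.076)).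
Proof.
  assert (H0 : 0.998949218750 <= exp ((-(1.076))/1024)) by (eapply Rle_trans; [|apply exp_ineq1_le]; lra).
  assert (H1 : 0.997899541641 <= exp ((-(1.076))/512)) by (apply (sq_low _ 0.998949218750); [lra| replace (((-(1.076))/512)/2) with ((-(1.076))/1024) by lra; exact H0 | lra]).
  assert (H2 : 0.995803495207 <= exp ((-(1.076))/256)) by (apply (sq_low _ 0.997899541641); [lra| replace (((-(1.076))/256)/2) with ((-(1.076))/512) by lra; exact H1 | lra]).
  assert (H3 : 0.991624601066 <= exp ((-(1.076))/128)) by (apply (sq_low _ 0.995803495207); [lra| replace (((-(1.076))/128)/2) with ((-(1.076))/256) by lra; exact H2 | lra]).
  assert (H4 : 0.983319349439 <= exp ((-(1.076))/64)) by (apply (sq_low _ 0.991624601066); [lra| replace (((-(1.076))/64)/2) with ((-(1.076))/128) by lra; exact H3 | lra]).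
  assert (H5 : 0.966916942981 <= exp ((-(1.076))/32)) by (apply (sq_low _ 0.983319349439); [lra| replace (((-(1.076))/32)/2) with ((-(1.076))/64) by lra; exact H4 | lra]).
  assert (H6 : 0.934928374623 <= exp ((-(1.076))/16)) by (apply (sq_low _ 0.966916942981); [lra| replace (((-(1.076))/16)/2) with ((-(1.076))/32) by lra; exact H5 | lra]).
  assert (H7 : 0.874091065675 <= exp ((-(1.076))/8)) by (apply (sq_low _ 0.934928374623); [lra| replace (((-(1.076))/8)/2) with ((-(1.076))/16) by lra; exact H6 | lra]).
  assert (H8 : 0.764035191092 <= exp ((-(1.076))/4)) by (apply (sq_low _ 0.874091065675); [lra| replace (((-(1.076))/4)/2) with ((-(1.076))/8) by lra; exact H7 | lra]).
  assert (H9 : 0.583749773226 <= exp ((-(1.076))/2)) by (apply (sq_low _ 0.764035191092); [lra| replace (((-(1.076))/2)/2) with ((-(1.076))/4) by lra; exact H8 | lra]).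
  assert (H10 : 0.340763797741 <= exp (-(1.076))) by (apply (sq_low _ 0.583749773226); [lra| replace ((-(1.076))/2) with ((-(1.076))/2) by lra; exact H9 | lra]).
  exact H10.
Qed.

Lemma pc7 : 0.332341467916 <= exp (-(1.101)).
Proof.
  assert (H0 : 0.998924804687 <= exp ((-(1.101))/1024)) by (eapply Rle_trans; [|apply exp_ineq1_le]; lra).
  assert (H1 : 0.997850765418 <= exp ((-(1.101))/512)) by (apply (sq_low _ 0.998924804687); [lra| replace (((-(1.101))/512)/2) with ((-(1.101))/1024) by lra; exact H0 | lra]).
  assert (H2 : 0.995706150045 <= exp ((-(1.101))/256)) by (apply (sq_low _ 0.997850765418); [lra| replace (((-(1.101))/256)/2) with ((-(1.101))/512) by lra; exact H1 | lra]).
  assert (H3 : 0.991430737237 <= exp ((-(1.101))/128)) by (apply (sq_low _ 0.995706150045); [lra| replace (((-(1.101))/128)/2) with ((-(1.101))/256) by lra; exact H2 | lra]).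
  assert (H4 : 0.982934906738 <= exp ((-(1.101))/64)) by (apply (sq_low _ 0.991430737237); [lra| replace (((-(1.101))/64)/2) with ((-(1.101))/128) by lra; exact H3 | lra]).
  assert (H5 : 0.966161030884 <= exp ((-(1.101))/32)) by (apply (sq_low _ 0.982934906738); [lra| replace (((-(1.101))/32)/2) with ((-(1.101))/64) by lra; exact H4 | lra]).
  assert (H6 : 0.933467137598 <= exp ((-(1.101))/16)) by (apply (sq_low _ 0.966161030884); [lra| replace (((-(1.101))/16)/2) with ((-(1.101))/32) by lra; exact H5 | lra]).
  assert (H7 : 0.871360896975 <= exp ((-(1.101))/8)) by (apply (sq_low _ 0.933467137598); [lra| replace (((-(1.101))/8)/2) with ((-(1.101))/16) by lra; exact H6 | lra]).
  assert (H8 : 0.759269812777 <= exp ((-(1.101))/4)) by (apply (sq_low _ 0.871360896975); [lra| replace (((-(1.101))/4)/2) with ((-(1.101))/8) by lra; exact H7 | lra]).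
  assert (H9 : 0.576490648594 <= exp ((-(1.101))/2)) by (apply (sq_low _ 0.759269812777); [lra| replace (((-(1.101))/2)/2) with ((-(1.101))/4) by lra; exact H8 | lra]).
  assert (H10 : 0.332341467916 <= exp (-(1.101))) by (apply (sq_low _ 0.576490648594); [lra| replace ((-(1.101))/2) with ((-(1.101))/2) by lra; exact H9 | lra]).
  exact H10.
Qed.

Lemma pc8 : 0.324127106888 <= exp (-(1.126)).
Proof.
  assert (H0 : 0.998900390625 <= exp ((-(1.126))/1024)) by (eapply Rle_trans; [|apply exp_ineq1_le]; lra).
  assert (H1 : 0.997801990390 <= exp ((-(1.126))/512)) by (apply (sq_low _ 0.998900390625); [lra| replace (((-(1.126))/512)/2) with ((-(1.126))/1024) by lra; exact H0 | lra]).
  assert (H2 : 0.995608812026 <= exp ((-(1.126))/256)) by (apply (sq_low _ 0.997801990390); [lra| replace (((-(1.126))/256)/2) with ((-(1.126))/512) by lra; exact H1 | lra]).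
  assert (H3 : 0.991236906583 <= exp ((-(1.126))/128)) by (apply (sq_low _ 0.995608812026); [lra| replace (((-(1.126))/128)/2) with ((-(1.126))/256) by lra; exact H2 | lra]).
  assert (H4 : 0.982550604972 <= exp ((-(1.126))/64)) by (apply (sq_low _ 0.991236906583); [lra| replace (((-(1.126))/64)/2) with ((-(1.126))/128) by lra; exact H3 | lra]).
  assert (H5 : 0.965405691330 <= exp ((-(1.126))/32)) by (apply (sq_low _ 0.982550604972); [lra| replace (((-(1.126))/32)/2) with ((-(1.126))/64) by lra; exact H4 | lra]).
  assert (H6 : 0.932008148852 <= exp ((-(1.126))/16)) by (apply (sq_low _ 0.965405691330); [lra| replace (((-(1.126))/16)/2) with ((-(1.126))/32) by lra; exact H5 | lra]).
  assert (H7 : 0.868639189526 <= exp ((-(1.126))/8)) by (apply (sq_low _ 0.932008148852); [lra| replace (((-(1.126))/8)/2) with ((-(1.126))/16) by lra; exact H6 | lra]).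
  assert (H8 : 0.754534041580 <= exp ((-(1.126))/4)) by (apply (sq_low _ 0.868639189526); [lra| replace (((-(1.126))/4)/2) with ((-(1.126))/8) by lra; exact H7 | lra]).
  assert (H9 : 0.569321619903 <= exp ((-(1.126))/2)) by (apply (sq_low _ 0.754534041580); [lra| replace (((-(1.126))/2)/2) with ((-(1.126))/4) by lra; exact H8 | lra]).
  assert (H10 : 0.324127106888 <= exp (-(1.126))) by (apply (sq_low _ 0.569321619903); [lra| replace ((-(1.126))/2) with ((-(1.126))/2) by lra; exact H9 | lra]).
  exact H10.
Qed.

Lemma pc9 : 0.316115583437 <= exp (-(1.151)).
Proof.
  assert (H0 : 0.998875976562 <= exp ((-(1.151))/1024)) by (eapply Rle_trans; [|apply exp_ineq1_le]; lra).
  assert (H1 : 0.997753216552 <= exp ((-(1.151))/512)) by (apply (sq_low _ 0.998875976562); [lra| replace (((-(1.151))/512)/2) with ((-(1.151))/1024) by lra; exact H0 | lra]).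
  assert (H2 : 0.995511481139 <= exp ((-(1.151))/256)) by (apply (sq_low _ 0.997753216552); [lra| replace (((-(1.151))/256)/2) with ((-(1.151))/512) by lra; exact H1 | lra]).
  assert (H3 : 0.991043109079 <= exp ((-(1.151))/128)) by (apply (sq_low _ 0.995511481139); [lra| replace (((-(1.151))/128)/2) with ((-(1.151))/256) by lra; exact H2 | lra]).
  assert (H4 : 0.982166444052 <= exp ((-(1.151))/64)) by (apply (sq_low _ 0.991043109079); [lra| replace (((-(1.151))/64)/2) with ((-(1.151))/128) by lra; exact H3 | lra]).
  assert (H5 : 0.964650923821 <= exp ((-(1.151))/32)) by (apply (sq_low _ 0.982166444052); [lra| replace (((-(1.151))/32)/2) with ((-(1.151))/64) by lra; exact H4 | lra]).
  assert (H6 : 0.930551404828 <= exp ((-(1.151))/16)) by (apply (sq_low _ 0.964650923821); [lra| replace (((-(1.151))/16)/2) with ((-(1.151))/32) by lra; exact H5 | lra]).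
  assert (H7 : 0.865925917027 <= exp ((-(1.151))/8)) by (apply (sq_low _ 0.930551404828); [lra| replace (((-(1.151))/8)/2) with ((-(1.151))/16) by lra; exact H6 | lra]).
  assert (H8 : 0.749827693779 <= exp ((-(1.151))/4)) by (apply (sq_low _ 0.865925917027); [lra| replace (((-(1.151))/4)/2) with ((-(1.151))/8) by lra; exact H7 | lra]).
  assert (H9 : 0.562241570357 <= exp ((-(1.151))/2)) by (apply (sq_low _ 0.749827693779); [lra| replace (((-(1.151))/2)/2) with ((-(1.151))/4) by lra; exact H8 | lra]).
  assert (H10 : 0.316115583437 <= exp (-(1.151))) by (apply (sq_low _ 0.562241570357); [lra| replace ((-(1.151))/2) with ((-(1.151))/2) by lra; exact H9 | lra]).
  exact H10.
Qed.

Lemma pc10 : 0.308301894413 <= exp (-(1.176)).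
Proof.
  assert (H0 : 0.998851562500 <= exp ((-(1.176))/1024)) by (eapply Rle_trans; [|apply exp_ineq1_le]; lra).
  assert (H1 : 0.997704443908 <= exp ((-(1.176))/512)) by (apply (sq_low _ 0.998851562500); [lra| replace (((-(1.176))/512)/2) with ((-(1.176))/1024) by lra; exact H0 | lra]).
  assert (H2 : 0.995414157393 <= exp ((-(1.176))/256)) by (apply (sq_low _ 0.997704443908); [lra| replace (((-(1.176))/256)/2) with ((-(1.176))/512) by lra; exact H1 | lra]).
  assert (H3 : 0.990849344738 <= exp ((-(1.176))/128)) by (apply (sq_low _ 0.995414157393); [lra| replace (((-(1.176))/128)/2) with ((-(1.176))/256) by lra; exact H2 | lra]).
  assert (H4 : 0.981782423967 <= exp ((-(1.176))/64)) by (apply (sq_low _ 0.990849344738); [lra| replace (((-(1.176))/64)/2) with ((-(1.176))/128) by lra; exact H3 | lra]).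
  assert (H5 : 0.963896728010 <= exp ((-(1.176))/32)) by (apply (sq_low _ 0.981782423967); [lra| replace (((-(1.176))/32)/2) with ((-(1.176))/64) by lra; exact H4 | lra]).
  assert (H6 : 0.929096902268 <= exp ((-(1.176))/16)) by (apply (sq_low _ 0.963896728010); [lra| replace (((-(1.176))/16)/2) with ((-(1.176))/32) by lra; exact H5 | lra]).
  assert (H7 : 0.863221053803 <= exp ((-(1.176))/8)) by (apply (sq_low _ 0.929096902268); [lra| replace (((-(1.176))/8)/2) with ((-(1.176))/16) by lra; exact H6 | lra]).
  assert (H8 : 0.745150587728 <= exp ((-(1.176))/4)) by (apply (sq_low _ 0.863221053803); [lra| replace (((-(1.176))/4)/2) with ((-(1.176))/8) by lra; exact H7 | lra]).
  assert (H9 : 0.555249398391 <= exp ((-(1.176))/2)) by (apply (sq_low _ 0.745150587728); [lra| replace (((-(1.176))/2)/2) with ((-(1.176))/4) by lra; exact H8 | lra]).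
  assert (H10 : 0.308301894413 <= exp (-(1.176))) by (apply (sq_low _ 0.555249398391); [lra| replace ((-(1.176))/2) with ((-(1.176))/2) by lra; exact H9 | lra]).
  exact H10.
Qed.

Lemma pc11 : 0.300681158506 <= exp (-(1.201)).
Proof.
  assert (H0 : 0.998827148437 <= exp ((-(1.201))/1024)) by (eapply Rle_trans; [|apply exp_ineq1_le]; lra).
  assert (H1 : 0.997655672454 <= exp ((-(1.201))/512)) by (apply (sq_low _ 0.998827148437); [lra| replace (((-(1.201))/512)/2) with ((-(1.201))/1024) by lra; exact H0 | lra]).
  assert (H2 : 0.995316840779 <= exp ((-(1.201))/256)) by (apply (sq_low _ 0.997655672454); [lra| replace (((-(1.201))/256)/2) with ((-(1.201))/512) by lra; exact H1 | lra]).
  assert (H3 : 0.990655613538 <= exp ((-(1.201))/128)) by (apply (sq_low _ 0.995316840779); [lra| replace (((-(1.201))/128)/2) with ((-(1.201))/256) by lra; exact H2 | lra]).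
  assert (H4 : 0.981398544634 <= exp ((-(1.201))/64)) by (apply (sq_low _ 0.990655613538); [lra| replace (((-(1.201))/64)/2) with ((-(1.201))/128) by lra; exact H3 | lra]).
  assert (H5 : 0.963143103409 <= exp ((-(1.201))/32)) by (apply (sq_low _ 0.981398544634); [lra| replace (((-(1.201))/32)/2) with ((-(1.201))/64) by lra; exact H4 | lra]).
  assert (H6 : 0.927644637644 <= exp ((-(1.201))/16)) by (apply (sq_low _ 0.963143103409); [lra| replace (((-(1.201))/16)/2) with ((-(1.201))/32) by lra; exact H5 | lra]).
  assert (H7 : 0.860524573749 <= exp ((-(1.201))/8)) by (apply (sq_low _ 0.927644637644); [lra| replace (((-(1.201))/8)/2) with ((-(1.201))/16) by lra; exact H6 | lra]).
  assert (H8 : 0.740502542025 <= exp ((-(1.201))/4)) by (apply (sq_low _ 0.860524573749); [lra| replace (((-(1.201))/4)/2) with ((-(1.201))/8) by lra; exact H7 | lra]).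
  assert (H9 : 0.548344014745 <= exp ((-(1.201))/2)) by (apply (sq_low _ 0.740502542025); [lra| replace (((-(1.201))/2)/2) with ((-(1.201))/4) by lra; exact H8 | lra]).
  assert (H10 : 0.300681158506 <= exp (-(1.201))) by (apply (sq_low _ 0.548344014745); [lra| replace ((-(1.201))/2) with ((-(1.201))/2) by lra; exact H9 | lra]).
  exact H10.
Qed.


Lemma exp_le x y : x <= y -> exp x <= exp y.
Proof. intros [H|H]; [left; apply exp_increasing; auto| subst; lra]. Qed.

Lemma ln_ge y : 0 < y -> 1 - / y <= ln y.
Proof.
  intros Hy. pose proof (exp_ineq1_le (ln (/ y))). rewrite exp_ln in H by (apply Rinv_0_lt_compat; auto).
  rewrite ln_Rinv in H by auto. lra.
Qed.

Lemma pow_low (kp : R) (m : nat) : 2 <= kp -> exp (- (INR m / (kp - 1))) <= (1 - / kp) ^ m.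
Proof.
  intros Hk. assert (H0 : 0 < 1 - / kp).
  { assert (/ kp <= / 2) by (apply Rinv_le_contravar; lra). lra. }
  rewrite <- (exp_ln ((1 - /kp)^m)) by (apply pow_lt; auto).
  rewrite ln_pow by auto. apply exp_le.
  pose proof (ln_ge _ H0). pose proof (pos_INR m).
  assert (E : 1 - / (1 - / kp) = - (1 / (kp - 1))) by (field; lra).
  rewrite E in H. 
  replace (- (INR m / (kp - 1))) with (INR m * (- (1 / (kp - 1)))) by (field; lra).
  apply Rmult_le_compat_l; auto.
Qed.

Lemma piece (n : nat) kp l h hv E : 1000 <= kp -> l * kp <= INR n <= h * kp -> 0 < l -> h <= 1.2 ->
  h + 0.001 <= hv -> E <= exp (- hv) -> 0 <= E ->
  l * E <= INR n * / kp * (1 - / kp) ^ (pred n).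
Proof.
  intros Hk [H1 H2] Hl Hh Hhv HE HE0.
  assert (Hn : (1 <= n)%nat).
  { destruct n; [simpl in H1; exfalso; nra| lia]. }
  pose proof (pow_low kp (pred n) ltac:(lra)).
  assert (HI : INR (pred n) = INR n - 1) by (destruct n; [lia| simpl pred; rewrite S_INR; ring]).
  assert (exp (- hv) <= exp (- (INR (pred n) / (kp - 1)))).
  { apply exp_le. rewrite HI. apply Ropp_le_contravar.
    apply Rmult_le_reg_r with (kp - 1); [lra|]. unfold Rdiv. rewrite Rmult_assoc, Rinv_l by lra. nra. }
  assert (Hx : l <= INR n * / kp).
  { apply Rmult_le_reg_r with kp; [lra|]. rewrite Rmult_assoc, Rinv_l by lra. lra. }
  apply Rmult_le_compat; lra.
Qed.

Lemma P1_low (n : nat) kp : 1000 <= kp -> 0.9 * kp <= INR n <= 1.2 * kp ->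
  0.353 <= INR n * / kp * (1 - / kp) ^ (pred n).
Proof.
  intros Hk [H1 H2].
  destruct (Rle_lt_dec (INR n) (0.925 * kp)) as [Hh1|Hh1].
  { eapply Rle_trans; [|eapply (piece n kp 0.9 0.925 (0.926)); [exact Hk|lra|lra|lra|lra|apply pc0|lra]]. lra. }
  destruct (Rle_lt_dec (INR n) (0.95 * kp)) as [Hh2|Hh2].
  { eapply Rle_trans; [|eapply (piece n kp 0.925 0.95 (0.951)); [exact Hk|lra|lra|lra|lra|apply pc1|lra]]. lra. }
  destruct (Rle_lt_dec (INR n) (0.975 * kp)) as [Hh3|Hh3].
  { eapply Rle_trans; [|eapply (piece n kp 0.95 0.975 (0.976)); [exact Hk|lra|lra|lra|lra|apply pc2|lra]]. lra. }
  destruct (Rle_lt_dec (INR n) (1.0 * kp)) as [Hh4|Hh4].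
  { eapply Rle_trans; [|eapply (piece n kp 0.975 1.0 (1.001)); [exact Hk|lra|lra|lra|lra|apply pc3|lra]]. lra. }
  destruct (Rle_lt_dec (INR n) (1.025 * kp)) as [Hh5|Hh5].
  { eapply Rle_trans; [|eapply (piece n kp 1.0 1.025 (1.026)); [exact Hk|lra|lra|lra|lra|apply pc4|lra]]. lra. }
  destruct (Rle_lt_dec (INR n) (1.05 * kp)) as [Hh6|Hh6].
  { eapply Rle_trans; [|eapply (piece n kp 1.025 1.05 (1.051)); [exact Hk|lra|lra|lra|lra|apply pc5|lra]]. lra. }
  destruct (Rle_lt_dec (INR n) (1.075 * kp)) as [Hh7|Hh7].
  { eapply Rle_trans; [|eapply (piece n kp 1.05 1.075 (1.076)); [exact Hk|lra|lra|lra|lra|apply pc6|lra]]. lra. }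
  destruct (Rle_lt_dec (INR n) (1.1 * kp)) as [Hh8|Hh8].
  { eapply Rle_trans; [|eapply (piece n kp 1.075 1.1 (1.101)); [exact Hk|lra|lra|lra|lra|apply pc7|lra]]. lra. }
  destruct (Rle_lt_dec (INR n) (1.125 * kp)) as [Hh9|Hh9].
  { eapply Rle_trans; [|eapply (piece n kp 1.1 1.125 (1.126)); [exact Hk|lra|lra|lra|lra|apply pc8|lra]]. lra. }
  destruct (Rle_lt_dec (INR n) (1.15 * kp)) as [Hh10|Hh10].
  { eapply Rle_trans; [|eapply (piece n kp 1.125 1.15 (1.151)); [exact Hk|lra|lra|lra|lra|apply pc9|lra]]. lra. }
  destruct (Rle_lt_dec (INR n) (1.175 * kp)) as [Hh11|Hh11].
  { eapply Rle_trans; [|eapply (piece n kp 1.15 1.175 (1.176)); [exact Hk|lra|lra|lra|lra|apply pc10|lra]]. lra. }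
  assert (Hh12 : INR n <= 1.2 * kp) by lra.
  { eapply Rle_trans; [|eapply (piece n kp 1.175 1.2 (1.201)); [exact Hk|lra|lra|lra|lra|apply pc11|lra]]. lra. }
Qed.


Definition lam : R := /1000.
Definition aa : R := 5/6.
Definition bb (M : R) : R := 5/18 * M.
Definition eps (M : R) : R := exp (lam * (1 - bb M)).
Definition NN (k : nat) : nat := (8 * k + 2)%nat.
Definition Phi (M : R) (k s n : nat) (kp : R) : R :=
  if Rle_dec (INR n) M then 0
  else Rmin 1 (exp (lam * (kp - aa * INR n - bb M)) + eps M * INR (NN k - s)).

Lemma Phi_le1 M k s n kp : Phi M k s n kp <= 1.
Proof. unfold Phi. destruct (Rle_dec _ _); [lra| apply Rmin_l]. Qed.

Lemma Phi_leE M k s n kp :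
  Phi M k s n kp <= exp (lam * (kp - aa * INR n - bb M)) + eps M * INR (NN k - s).
Proof.
  unfold Phi. destruct (Rle_dec _ _); [|apply Rmin_r].
  pose proof (exp_pos (lam * (kp - aa * INR n - bb M))). pose proof (pos_INR (NN k - s)).
  unfold eps. pose proof (exp_pos (lam * (1 - bb M))). nra.
Qed.

Lemma budget (delta : R) (k s n : nat) (kp : R) : 0 <= delta <= 3 ->
  delta + 1 + INR (s / 2) - (delta + 1) * (INR k - INR n) <= kp -> kp <= aa * INR n ->
  INR (NN k - s) = INR (NN k - S s) + 1.
Proof.
  intros Hd Hinv Hkp. unfold aa in Hkp. pose proof (pos_INR n). pose proof (pos_INR k).
  assert (INR (s / 2) < INR (4 * k)).
  { rewrite mult_INR. replace (INR 4) with 4 by (simpl; ring).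
    assert (0 <= (3 - delta) * INR k) by (apply Rmult_le_pos; lra).
    assert (0 <= delta * INR n) by (apply Rmult_le_pos; lra). nra. }
  apply INR_lt in H1.
  pose proof (Nat.div_mod_eq s 2). pose proof (Nat.mod_upper_bound s 2 ltac:(lia)).
  unfold NN. replace (8 * k + 2 - s)%nat with (S (8 * k + 2 - S s)) by lia.
  rewrite S_INR. reflexivity.
Qed.

Lemma exp_lam_up : exp lam * (1 - lam) <= 1.
Proof.
  pose proof (exp_ineq1_le (- lam)). pose proof (exp_pos lam).
  assert (exp lam * exp (- lam) = 1) by (rewrite <- exp_plus; replace (lam + - lam) with 0 by ring; apply exp_0).
  nra.
Qed.

Lemma exp_neg_up c : 0 <= c -> exp (- (lam * c)) * (1 + lam * c) <= 1.
Proof.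
  intros Hc. pose proof (exp_ineq1_le (lam * c)). pose proof (exp_pos (- (lam * c))).
  assert (exp (lam * c) * exp (- (lam * c)) = 1) by (rewrite <- exp_plus; replace (lam * c + - (lam * c)) with 0 by ring; apply exp_0).
  nra.
Qed.

Lemma drift P1 c u v : 0.353 <= P1 <= 1 -> 1.884 <= c -> u * (1 - lam) <= 1 -> v * (1 + lam * c) <= 1 ->
  0 < u -> 0 < v -> P1 * v + (1 - P1) * u <= 1.
Proof.
  unfold lam; intros HP Hc Hu Hv Hu0 Hv0.
  assert (key : 1 + /1000 * c <= P1 * (1 + c)) by nra.
  assert (HP1 : P1 * v * (1 + /1000 * c) <= P1) by nra.
  assert (HP2 : (1 - P1) * u * (1 - /1000) <= 1 - P1) by nra.
  nra.
Qed.


Lemma lam_pos : 0 < lam. Proof. unfold lam; lra. Qed.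

Lemma eps_low M y : y <= 1 -> exp (lam * (y - bb M)) <= eps M.
Proof. intros H. unfold eps. apply exp_le. pose proof lam_pos. nra. Qed.

Lemma step_common delta M k s n kp (K1 K0 P1 : R) :
  2.7175 <= delta <= 3 -> 5000 <= M -> delta + 1 <= kp ->
  delta + 1 + INR (s/2) - (delta+1)*(INR k - INR n) <= kp ->
  0 <= P1 <= 1 ->
  K1 <= kp -> K0 <= kp + 1 ->
  (forall (Hn1 : (1 <= n)%nat) (Hhigh : aa * INR n < kp) (HY : kp - aa * INR n - bb M < 0)
     (Hw : 0.9 * kp <= INR n <= 1.2 * kp) (Hk : 1000 <= kp),
     let E := exp (lam * (kp - aa * INR n - bb M)) in
     P1 * exp (lam * (K1 - aa * INR (pred n) - bb M)) + (1 - P1) * exp (lam * (K0 - aa * INR n - bb M)) <= E) ->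
  P1 * Phi M k (S s) (pred n) K1 + (1 - P1) * Phi M k (S s) n K0 <= Phi M k s n kp.
Proof.
  intros Hd HM Hkp Hinv HP HK1 HK0 Hwin.
  destruct (Rle_dec (INR n) M) as [Hn|Hn].
  - assert (INR (pred n) <= INR n) by (apply le_INR; lia).
    unfold Phi. repeat (destruct Rle_dec; try lra).
  - assert (Hn1 : (1 <= n)%nat) by (destruct n; [simpl in Hn; lra| lia]).
    assert (HI : INR (pred n) = INR n - 1) by (destruct n; [lia| simpl pred; rewrite S_INR; ring]).
    set (E := exp (lam * (kp - aa * INR n - bb M))).
    set (W := INR (NN k - s)). set (W' := INR (NN k - S s)).
    assert (HW : W' <= W) by (apply le_INR; lia).
    assert (Heps : 0 < eps M) by apply exp_pos.
    assert (HE : 0 < E) by apply exp_pos.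
    assert (HW0 : 0 <= W') by apply pos_INR.
    pose proof (Phi_le1 M k (S s) (pred n) K1). pose proof (Phi_le1 M k (S s) n K0).
    pose proof (Phi_leE M k (S s) (pred n) K1). pose proof (Phi_leE M k (S s) n K0).
    fold W' in H1, H2. rewrite HI in H1.
    assert (Hcur : Phi M k s n kp = Rmin 1 (E + eps M * W)) by (unfold Phi; destruct Rle_dec; [contradiction|reflexivity]).
    rewrite Hcur. destruct (Rle_dec 1 (E + eps M * W)) as [Hge|Hlt].
    + rewrite Rmin_left by auto.
      assert (P1 * Phi M k (S s) (pred n) K1 <= P1 * 1) by (apply Rmult_le_compat_l; lra).
      assert ((1 - P1) * Phi M k (S s) n K0 <= (1 - P1) * 1) by (apply Rmult_le_compat_l; lra).
      lra.
    + rewrite Rmin_right by lra.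
      assert (HY : kp - aa * INR n - bb M < 0).
      { destruct (Rlt_le_dec (kp - aa * INR n - bb M) 0) as [h|h]; auto.
        exfalso. assert (1 <= E). { rewrite <- exp_0. apply exp_le. pose proof lam_pos. nra. }
        assert (0 <= eps M * W) by (apply Rmult_le_pos; [lra| apply pos_INR]). lra. }
      destruct (Rle_dec kp (aa * INR n)) as [Hlow|Hhigh].
      * assert (HWW : W = W' + 1) by (apply (budget delta k s n kp); auto; lra).
        assert (exp (lam * (K1 - aa * (INR n - 1) - bb M)) <= eps M) by (apply eps_low; unfold aa in *; lra).
        assert (exp (lam * (K0 - aa * INR n - bb M)) <= eps M) by (apply eps_low; unfold aa in *; lra).
        assert (P1 * Phi M k (S s) (pred n) K1 <= P1 * (eps M + eps M * W')) by (apply Rmult_le_compat_l; lra).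
        assert ((1 - P1) * Phi M k (S s) n K0 <= (1 - P1) * (eps M + eps M * W')) by (apply Rmult_le_compat_l; lra).
        rewrite HWW. nra.
      * apply Rnot_le_lt in Hhigh.
        assert (Hk : 1000 <= kp) by (unfold aa in *; lra).
        assert (Hw : 0.9 * kp <= INR n <= 1.2 * kp) by (unfold aa, bb in *; lra).
        specialize (Hwin Hn1 Hhigh HY Hw Hk). simpl in Hwin. fold E in Hwin. rewrite HI in Hwin.
        assert (P1 * Phi M k (S s) (pred n) K1 <= P1 * (exp (lam * (K1 - aa * (INR n - 1) - bb M)) + eps M * W')) by (apply Rmult_le_compat_l; lra).
        assert ((1 - P1) * Phi M k (S s) n K0 <= (1 - P1) * (exp (lam * (K0 - aa * INR n - bb M)) + eps M * W')) by (apply Rmult_le_compat_l; lra).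
        assert (eps M * W' <= eps M * W) by (apply Rmult_le_compat_l; lra).
        nra.
Qed.

Lemma step_AT delta M k s n kp :
  2.7175 <= delta <= 3 -> 5000 <= M -> delta + 1 <= kp ->
  delta + 1 + INR (s/2) - (delta+1)*(INR k - INR n) <= kp ->
  0 <= INR n * / kp * (1 - / kp) ^ (pred n) <= 1 ->
  (INR n * / kp * (1 - / kp) ^ (pred n)) * Phi M k (S s) (pred n) (Rmax (kp + 1 - (delta + 1)) (delta + 1))
  + (1 - INR n * / kp * (1 - / kp) ^ (pred n)) * Phi M k (S s) n (kp + 1) <= Phi M k s n kp.
Proof.
  intros Hd HM Hkp Hinv HP.
  apply step_common with delta; auto.
  - apply Rmax_lub; lra.
  - lra.
  - intros Hn1 Hhigh HY Hw Hk E.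
    set (P1 := INR n * / kp * (1 - / kp) ^ (pred n)) in *.
    assert (HP1 : 0.353 <= P1) by (apply P1_low; auto).
    rewrite Rmax_left by lra.
    assert (HI : INR (pred n) = INR n - 1) by (destruct n; [lia| simpl pred; rewrite S_INR; ring]).
    rewrite HI.
    replace (exp (lam * (kp + 1 - (delta + 1) - aa * (INR n - 1) - bb M))) with (E * exp (- (lam * (delta - aa))))
      by (unfold E; rewrite <- exp_plus; f_equal; ring).
    replace (exp (lam * (kp + 1 - aa * INR n - bb M))) with (E * exp lam)
      by (unfold E; rewrite <- exp_plus; f_equal; ring).
    assert (HE : 0 < E) by apply exp_pos.
    pose proof (drift P1 (delta - aa) (exp lam) (exp (- (lam * (delta - aa))))) as D.
    assert (P1 * exp (- (lam * (delta - aa))) + (1 - P1) * exp lam <= 1).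
    { apply D; try lra; unfold aa in *; try lra.
      - apply exp_lam_up.
      - apply exp_neg_up; lra.
      - apply exp_pos.
      - apply exp_pos. }
    nra.
Qed.

Lemma step_BT delta M k s n kp P1 :
  2.7175 <= delta <= 3 -> 5000 <= M -> delta + 1 <= kp ->
  delta + 1 + INR (s/2) - (delta+1)*(INR k - INR n) <= kp ->
  0 <= P1 <= 1 ->
  P1 * Phi M k (S s) (pred n) (Rmax (kp - delta) (delta + 1))
  + (1 - P1) * Phi M k (S s) n kp <= Phi M k s n kp.
Proof.
  intros Hd HM Hkp Hinv HP.
  apply step_common with delta; auto.
  - apply Rmax_lub; lra.
  - lra.
  - intros Hn1 Hhigh HY Hw Hk E.
    rewrite Rmax_left by lra.
    assert (HI : INR (pred n) = INR n - 1) by (destruct n; [lia| simpl pred; rewrite S_INR; ring]).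
    rewrite HI.
    replace (exp (lam * (kp - delta - aa * (INR n - 1) - bb M))) with (E * exp (- (lam * (delta - aa))))
      by (unfold E; rewrite <- exp_plus; f_equal; ring).
    fold E.
    assert (HE : 0 < E) by apply exp_pos.
    assert (exp (- (lam * (delta - aa))) <= 1).
    { rewrite <- exp_0. apply exp_le. pose proof lam_pos. unfold aa. nra. }
    assert (P1 * (E * exp (- (lam * (delta - aa)))) <= P1 * E) by (apply Rmult_le_compat_l; [lra| nra]).
    lra.
Qed.


Definition Inv (delta : R) (k s : nat) (st : list node) :=
  exists kp sg, allsame st kp sg /\ delta + 1 <= kp /\
    delta + 1 + INR (s / 2) - (delta + 1) * (INR k - INR (n_active st)) <= kp.

Definition PhiL (M : R) (k s : nat) (st : list node) : R :=
  Phi M k s (n_active st) (firstkap st).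

Lemma PhiL_eq M k s st kp sg : 0 <= M -> allsame st kp sg ->
  PhiL M k s st = Phi M k s (n_active st) kp.
Proof.
  intros HM H. unfold PhiL. destruct (n_active st) eqn:E.
  - unfold Phi. simpl. destruct Rle_dec; [reflexivity| lra].
  - rewrite (firstkap_same st kp sg); auto. lia.
Qed.

Lemma pat_weight_nonneg s st X :
  (forall nd, In nd st -> active nd = true -> 0 <= tx_prob s nd <= 1) -> 0 <= pat_weight s st X.
Proof.
  revert X; induction st as [|nd st IH]; intros X H; destruct X as [|x X]; simpl; try lra.
  apply Rmult_le_pos.
  - destruct (active nd) eqn:E; [|destruct x; lra].
    destruct (H nd (or_introl eq_refl) E). destruct x; lra.
  - apply IH. intros; apply H; simpl; auto.
Qed.

Lemma G_mono s st f g :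
  (forall nd, In nd st -> active nd = true -> 0 <= tx_prob s nd <= 1) ->
  (forall c, f c <= g c) -> G s st f <= G s st g.
Proof.
  intros Hw Hfg. unfold G. apply sumR_map_le. intros X _.
  apply Rmult_le_compat_l; auto. apply pat_weight_nonneg; auto.
Qed.

Lemma G_affine s st u v f :
  G s st (fun c => u + v * f c) = u + v * G s st f.
Proof.
  unfold G.
  rewrite (sumR_map_ext _ (fun X => u * pat_weight s st X + v * (pat_weight s st X * f (n_tx st X)))) by (intros; ring).
  rewrite sumR_map_lin.
  assert (H1 : sumR (map (pat_weight s st) (patterns (length st))) = 1).
  { rewrite <- (G_const s st 1). unfold G. apply sumR_map_ext; intros; ring. }
  rewrite H1. ring.
Qed.

Lemma div2_S s : ((S s) / 2 = s / 2 + (if Nat.even s then 0 else 1))%nat.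
Proof.
  pose proof (Nat.div_mod_eq s 2). pose proof (Nat.mod_upper_bound s 2 ltac:(lia)).
  pose proof (Nat.div_mod_eq (S s) 2). pose proof (Nat.mod_upper_bound (S s) 2 ltac:(lia)).
  destruct (Nat.even s) eqn:E.
  - apply Nat.even_spec in E. destruct E as [m Hm]. lia.
  - assert (Nat.odd s = true) by (rewrite <- Nat.negb_even, E; reflexivity).
    apply Nat.odd_spec in H3. destruct H3 as [m Hm]. lia.
Qed.

Lemma Inv_next delta k s st X : 0 <= delta -> Inv delta k s st -> length X = length st ->
  Inv delta k (S s) (next_state delta s st X).
Proof.
  intros Hd [kp [sg [Hs [Hk Hacc]]]] HL.
  set (d := Nat.eqb (n_tx st X) 1).
  destruct (next_props delta s d st X kp sg HL Hs) as [Ha Hb].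
  exists (Kn delta s d kp), (Sn d sg). unfold next_state. fold d. split; auto.
  rewrite div2_S, plus_INR.
  assert (Hn : INR (n_active (map2n (upd_node delta s d) st X)) = INR (n_active st) - (if d then 1 else 0)).
  { destruct d eqn:Ed.
    - unfold d in Ed. apply Nat.eqb_eq in Ed. rewrite Ed in Hb.
      rewrite <- Hb, plus_INR. simpl. ring.
    - rewrite <- Hb, Nat.add_0_r. ring. }
  rewrite Hn. unfold Kn.
  destruct (Nat.even s), d; rewrite ?INR_0, ?INR_1.
  - pose proof (Rmax_l (kp - delta) (delta + 1)). pose proof (Rmax_r (kp - delta) (delta + 1)). split; nra.
  - split; nra.
  - pose proof (Rmax_l (kp + 1 - (delta + 1)) (delta + 1)). pose proof (Rmax_r (kp + 1 - (delta + 1)) (delta + 1)). split; nra.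
  - split; nra.
Qed.


Definition qof (s : nat) (kp : R) (sg : nat) : R :=
  if Nat.even s then / (1 + log2 (INR sg + 1)) else / kp.

Lemma log2_nonneg x : 1 <= x -> 0 <= log2 x.
Proof.
  intros H. unfold log2. apply Rmult_le_pos.
  - pose proof (ln_ge x ltac:(lra)). assert (/ x <= 1) by (apply Rle_trans with (/ 1); [apply Rinv_le_contravar; lra| rewrite Rinv_1; lra]). lra.
  - left. apply Rinv_0_lt_compat. rewrite <- ln_1. apply ln_increasing; lra.
Qed.

Lemma qof_bounds s kp sg : 1 <= kp -> 0 <= qof s kp sg <= 1.
Proof.
  intros H. unfold qof. destruct (Nat.even s).
  - assert (0 <= log2 (INR sg + 1)) by (apply log2_nonneg; pose proof (pos_INR sg); lra).
    split; [left; apply Rinv_0_lt_compat; lra|]. apply Rle_trans with (/ 1); [apply Rinv_le_contravar; lra| rewrite Rinv_1; lra].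
  - split; [left; apply Rinv_0_lt_compat; lra|]. apply Rle_trans with (/ 1); [apply Rinv_le_contravar; lra| rewrite Rinv_1; lra].
Qed.

Lemma allq_same s st kp sg : allsame st kp sg -> allq s st (qof s kp sg).
Proof.
  intros H nd Hin Ha. destruct (H nd Hin Ha) as [Hk Hs].
  unfold tx_prob, qof. rewrite Hk, Hs. reflexivity.
Qed.

Lemma prob_le_S delta M T s st :
  prob_le delta M (S T) s st =
  sumR (map (fun X => pat_weight s st X * prob_le delta M T (S s) (next_state delta s st X))
            (patterns (length st))).
Proof. reflexivity. Qed.

Lemma main_ind delta M k : 2.7175 <= delta <= 3 -> 5000 <= M ->
  forall T s st, Inv delta k s st -> (delta + 1) * INR k <= INR ((s + T) / 2) ->
  1 - PhiL M k s st <= prob_le delta M T s st.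
Proof.
  intros Hd HM. induction T as [|T IH]; intros s st HI Hend.
  - simpl prob_le. destruct HI as [kp [sg [Hs [Hk Hacc]]]].
    rewrite (PhiL_eq M k s st kp sg) by (auto; lra).
    unfold Phi. destruct (Rle_dec (INR (n_active st)) M) as [Hn|Hn]; [lra|].
    rewrite Nat.add_0_r in Hend.
    assert (1 <= exp (lam * (kp - aa * INR (n_active st) - bb M))).
    { rewrite <- exp_0. apply exp_le. pose proof lam_pos. unfold aa, bb.
      apply Rmult_le_pos; [lra|]. nra. }
    assert (0 <= eps M * INR (NN k - s)) by (apply Rmult_le_pos; [left; apply exp_pos| apply pos_INR]).
    rewrite Rmin_left by lra. lra.
  - rewrite prob_le_S.
    pose proof HI as [kp [sg [Hs [Hk Hacc]]]].
    set (q := qof s kp sg).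
    assert (Hq : allq s st q) by (apply allq_same; auto).
    assert (Hqb : 0 <= q <= 1) by (apply qof_bounds; lra).
    assert (Hw : forall nd, In nd st -> active nd = true -> 0 <= tx_prob s nd <= 1).
    { intros nd Hin Ha. rewrite (Hq nd Hin Ha). auto. }
    set (n := n_active st).
    set (Phi1 := Phi M k (S s) (pred n) (Kn delta s true kp)).
    set (Phi0 := Phi M k (S s) n (Kn delta s false kp)).
    eapply Rle_trans; [|apply sumR_map_le with
      (f := fun X => pat_weight s st X * (1 - PhiL M k (S s) (next_state delta s st X)))].
    2: { intros X HX. apply Rmult_le_compat_l; [apply pat_weight_nonneg; auto|].
         apply IH.
         - apply Inv_next; [lra|auto|]. apply patterns_length; auto.
         - replace (S s + T)%nat with (s + S T)%nat by lia. auto. }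
    rewrite (sumR_map_ext _ (fun X => pat_weight s st X *
       ((1 - Phi0) + (Phi0 - Phi1) * (if Nat.eqb (n_tx st X) 1 then 1 else 0)))).
    2: { intros X HX. f_equal.
         pose proof (patterns_length _ _ HX) as HL.
         set (d := Nat.eqb (n_tx st X) 1).
         destruct (next_props delta s d st X kp sg HL Hs) as [Ha Hb].
         unfold next_state. fold d.
         rewrite (PhiL_eq M k (S s) _ _ _ ltac:(lra) Ha).
         destruct d eqn:Ed.
         - unfold d in Ed. apply Nat.eqb_eq in Ed. rewrite Ed in Hb.
           replace (n_active (map2n (upd_node delta s true) st X)) with (pred n) by (unfold n; lia).
           fold Phi1. ring.
         - rewrite Nat.add_0_r in Hb. rewrite Hb. fold n. fold Phi0. ring. }
    change (sumR (map (fun X => pat_weight s st X * ((1 - Phi0) + (Phi0 - Phi1) *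
             (if Nat.eqb (n_tx st X) 1 then 1 else 0))) (patterns (length st))))
      with (G s st (fun c => (1 - Phi0) + (Phi0 - Phi1) * (if Nat.eqb c 1 then 1 else 0))).
    rewrite G_affine.
    assert (HP : 0 <= G s st (fun c => if Nat.eqb c 1 then 1 else 0) <= 1).
    { split.
      - apply Rle_trans with (G s st (fun _ => 0)); [rewrite G_const; lra|].
        apply G_mono; auto. intros c; destruct (Nat.eqb c 1); lra.
      - apply Rle_trans with (G s st (fun _ => 1)); [|rewrite G_const; lra].
        apply G_mono; auto. intros c; destruct (Nat.eqb c 1); lra. }
    rewrite (G_one s st q Hq) in *. fold n in HP |- *.
    rewrite (PhiL_eq M k s st kp sg) by (auto; lra). fold n.
    fold n in Hacc.
    set (P := INR n * q * (1 - q) ^ Init.Nat.pred n) in *.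
    assert (Hst : P * Phi1 + (1 - P) * Phi0 <= Phi M k s n kp).
    { unfold Phi1, Phi0, Kn, P. unfold P, q, qof in HP |- *. destruct (Nat.even s).
      - apply step_BT; auto.
      - apply step_AT; auto. }
    nra.
Qed.


Lemma Inv_init delta k : Inv delta k 1 (init_state delta k).
Proof.
  exists (delta + 1), 0%nat. split; [|split].
  - intros nd Hin _. unfold init_state in Hin. apply repeat_spec in Hin. subst. simpl. auto.
  - lra.
  - assert (n_active (init_state delta k) = k).
    { unfold n_active, init_state. induction k; simpl; auto. }
    rewrite H. simpl (1 / 2)%nat. simpl INR. lra.
Qed.

Theorem mainTheorem7 (k : nat) (delta : R) :
  exp 1 < delta ->
  delta <= sum_f_R0 (fun j => (5/6) ^ (S j)) 4 ->
  let tau := 300 * delta * ln (1 + INR k) in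
  let gamma := (delta - 1) * (3 - delta) / (delta - 2) in
  let Ssum := 2 * sum_f_R0 (fun j => (5/6) ^ j) 4 * tau in
  let M := ((delta + 1) * ln delta - 1) / (ln delta - 1) * Ssum
           + ((gamma + 2 * tau + 1) * ln delta - 1) / (ln delta - 1) in
  M < INR k ->
  forall t : nat, (delta + 1) * INR k <= INR (n_AT t) ->
  prob_after delta M k t >= 1 - 1 / (1 + INR k).
Proof.
  intros He Hs tau gamma Ssum M HMk t Ht.
  pose proof e_low as Hel.
  assert (Hd : 2.7175 <= delta <= 3) by (simpl in Hs; lra).
  assert (HL : 1 < ln delta).
  { rewrite <- (ln_exp 1). apply ln_increasing; [apply exp_pos| lra]. }
  pose proof (pos_INR k) as Hk0.
  assert (Hlk : 0 <= ln (1 + INR k)).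
  { pose proof (ln_ge (1 + INR k) ltac:(lra)).
    assert (/ (1 + INR k) <= 1) by (apply Rle_trans with (/ 1); [apply Rinv_le_contravar; lra| rewrite Rinv_1; lra]). lra. }
  assert (Hlk2 : INR k / (1 + INR k) <= ln (1 + INR k)).
  { pose proof (ln_ge (1 + INR k) ltac:(lra)).
    replace (INR k / (1 + INR k)) with (1 - / (1 + INR k)) by (field; lra). lra. }
  assert (Htau : 0 <= tau) by (unfold tau; apply Rmult_le_pos; [lra| auto]).
  assert (HS : 4 * 3.5887 * 300 * 2.7175 * ln (1 + INR k) <= 2 * Ssum).
  { unfold Ssum, tau. simpl sum_f_R0. simpl pow. nra. }
  assert (HC1 : 2 <= ((delta + 1) * ln delta - 1) / (ln delta - 1)).
  { apply Rmult_le_reg_r with (ln delta - 1); [lra|]. unfold Rdiv.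
    rewrite Rmult_assoc, Rinv_l by lra. nra. }
  assert (Hg : 0 <= gamma).
  { unfold gamma. unfold Rdiv. apply Rmult_le_pos; [nra|]. left; apply Rinv_0_lt_compat; lra. }
  assert (HC2 : 0 <= ((gamma + 2 * tau + 1) * ln delta - 1) / (ln delta - 1)).
  { unfold Rdiv. apply Rmult_le_pos; [nra|]. left; apply Rinv_0_lt_compat; lra. }
  assert (HSs : 0 <= Ssum) by lra.
  assert (HMlow : 11700 * ln (1 + INR k) <= M).
  { unfold M. assert (2 * Ssum <= ((delta + 1) * ln delta - 1) / (ln delta - 1) * Ssum) by (apply Rmult_le_compat_r; lra). lra. }
  assert (Hkbig : 11000 <= INR k).
  { assert (H11 : 11700 * (INR k / (1 + INR k)) < INR k) by nra.
    assert (Hr : INR k / (1 + INR k) * (1 + INR k) = INR k) by (field; lra).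
    assert (0 <= INR k / (1 + INR k)) by (unfold Rdiv; apply Rmult_le_pos; [lra| left; apply Rinv_0_lt_compat; lra]).
    nra. }
  assert (HM5 : 5000 <= M).
  { assert (/ 2 <= INR k / (1 + INR k)).
    { apply Rmult_le_reg_r with (2 * (1 + INR k)); [lra|]. unfold Rdiv.
      replace (INR k * / (1 + INR k) * (2 * (1 + INR k))) with (2 * INR k) by (field; lra). lra. }
    nra. }
  unfold prob_after.
  assert (Hend : (delta + 1) * INR k <= INR ((1 + t) / 2)).
  { unfold n_AT in Ht. rewrite Nat.add_comm. auto. }
  pose proof (main_ind delta M k Hd HM5 t 1 (init_state delta k) (Inv_init delta k) Hend) as Hmain.
  assert (HPhi : PhiL M k 1 (init_state delta k) <= 1 / (1 + INR k)).
  { assert (Hn : n_active (init_state delta k) = k).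
    { unfold n_active, init_state. clear. induction k; simpl; auto. }
    unfold PhiL. rewrite Hn. unfold Phi. destruct (Rle_dec (INR k) M); [lra|].
    eapply Rle_trans; [apply Rmin_r|].
    assert (H1 : exp (lam * (firstkap (init_state delta k) - aa * INR k - bb M)) <= eps M).
    { assert (Hfk : firstkap (init_state delta k) = delta + 1).
      { clear -Hkbig. destruct k; [simpl in Hkbig; lra| reflexivity]. }
      rewrite Hfk. apply eps_low. unfold aa. lra. }
    assert (HN : INR (NN k - 1) = 8 * INR k + 1).
    { unfold NN. replace (8 * k + 2 - 1)%nat with (S (8 * k)) by lia.
      rewrite S_INR, mult_INR. simpl. ring. }
    rewrite HN.
    assert (Heps : eps M = exp lam * / exp (lam * bb M)).
    { unfold eps. rewrite <- exp_Ropp, <- exp_plus. f_equal. ring. }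
    assert (Hbig : (1 + INR k) ^ 3 <= exp (lam * bb M)).
    { rewrite <- (exp_ln ((1 + INR k) ^ 3)) by (apply pow_lt; lra).
      apply exp_le. rewrite ln_pow by lra. unfold lam, bb. simpl INR. nra. }
    pose proof exp_lam_up as Hu. pose proof (exp_pos lam) as Hu0.
    assert (Hu' : exp lam <= 1.002) by (set (u := exp lam) in *; unfold lam in Hu; nra).
    assert (Hepsb : eps M * (1 + INR k) ^ 3 <= 1.002).
    { rewrite Heps. pose proof (exp_pos (lam * bb M)).
      apply Rle_trans with (exp lam * / exp (lam * bb M) * exp (lam * bb M)).
      - apply Rmult_le_compat_l; [|auto]. apply Rmult_le_pos; [lra| left; apply Rinv_0_lt_compat; lra].
      - rewrite Rmult_assoc, Rinv_l by lra. lra. }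
    assert (Hepos : 0 < eps M) by apply exp_pos.
    assert (eps M + eps M * (8 * INR k + 1) <= 1 / (1 + INR k)).
    { apply Rmult_le_reg_r with ((1 + INR k) ^ 3); [apply pow_lt; lra|].
      unfold Rdiv. rewrite Rmult_1_l.
      replace (/ (1 + INR k) * (1 + INR k) ^ 3) with ((1 + INR k) ^ 2) by (simpl; field; lra).
      replace ((eps M + eps M * (8 * INR k + 1)) * (1 + INR k) ^ 3) with ((eps M * (1 + INR k) ^ 3) * (8 * INR k + 2)) by ring.
      apply Rle_trans with (1.002 * (8 * INR k + 2)).
      - apply Rmult_le_compat_r; lra.
      - simpl. nra. }
    lra. }
  lra.
Qed.
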